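(* Let $H\ge 2$ and let $\mathcal C=\{\boldsymbol g^1,\dots,\boldsymbol g^K\}\subset\mathcal G$ be a codebook containing the true goal $\boldsymbol g^*=\boldsymbol g^{k^*}$. Let the observed action trajectory $\boldsymbol a_{0:H-1}=\boldsymbol a^j_{0:H-1}$ be generated by agent $j$ under $\boldsymbol g^*$, i.e. there are beliefs $\boldsymbol b^j_0,\dots,\boldsymbol b^j_{H-1}\in\mathbb R^{d_b}$ with $\boldsymbol b^j_{t+1}=\mathcal D^j(\boldsymbol b^j_t,\boldsymbol a_t,\boldsymbol g^* )$ and $\boldsymbol a_{t+1}=\pi^j(\boldsymbol b^j_{t+1},\boldsymbol g^* )$ for $t=0,\dots,H-2$. Assume that $\pi(\cdot,\boldsymbol g)$ is $\xi_\pi$-Lipschitz in $\boldsymbol b$ and $\mathcal D(\cdot,\boldsymbol a,\boldsymbol g)$ is $\xi_{\mathcal D}$-Lipschitz in $\boldsymbol b$. Define for $t=0,\dots,H-2$ the mismatches $\Delta\boldsymbol b^j_t:=\Omega(\boldsymbol a_t,\boldsymbol g^* )-\boldsymbol b^j_t$, $\Delta\mathcal D_t(\boldsymbol b):=\mathcal D(\boldsymbol b,\boldsymbol a_t,\boldsymbol g^* )-\mathcal D^j(\boldsymbol b,\boldsymbol a_t,\boldsymbol g^* )$, $\Delta\pi_{t+1}:=\pi^j(\boldsymbol b^j_{t+1},\boldsymbol g^* )-\pi(\boldsymbol b^j_{t+1},\boldsymbol g^* )$, $\varepsilon_t:=\|\Delta\mathcal D_t(\boldsymbol b^j_t)\|+\xi_{\mathcal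 D}\|\Delta\boldsymbol b^j_t\|$, and the behavioral-mismatch energy $$\delta_{\mathrm{act}}:=\Big(\sum_{t=0}^{H-2}\big(\|\Delta\pi_{t+1}\|+\xi_\pi\|\varepsilon_t\|\big)^2\Big)^{1/2}.$$ If $\delta_{\mathrm{act}}<\bar\gamma_H(\mathcal C;\boldsymbol g^* )/2$, then the nearest-neighbor estimator $\hat k=\arg\min_k\|\Phi_H(\boldsymbol g^k)\|_2$ returns $\hat{\boldsymbol g}=\boldsymbol g^{\hat k}=\boldsymbol g^*$.
   Context: Actions lie in $\mathbb R^{d_a}$, beliefs in $\mathbb R^{d_b}$, goals in a set $\mathcal G\subseteq\mathbb R^{d_g}$. The (ego) agent has continuously differentiable models: an inverse belief predictor $\Omega:\mathbb R^{d_a}\times\mathcal G\to\mathbb R^{d_b}$, a forward dynamics model $\mathcal D:\mathbb R^{d_b}\times\mathbb R^{d_a}\times\mathcal G\to\mathbb R^{d_b}$, and a policy $\pi:\mathbb R^{d_b}\times\mathcal G\to\mathbb R^{d_a}$. The observed agent $j$ has its own dynamics $\mathcal D^j$ and policy $\pi^j$ of the same types. Given the trajectory $\boldsymbol a_{0:H-1}$ and a candidate goal $\boldsymbol g\in\mathcal G$, set $F_{\boldsymbol g}(\boldsymbol a):=\pi\big(\mathcal D(\Omega(\boldsymbol a,\boldsymbol g),\boldsymbol a,\boldsymbol g),\boldsymbol g\big)$, the one-step residual $\phi_t(\boldsymbol g):=\boldsymbol a_{t+1}-F_{\boldsymbol g}(\boldsymbol a_t)$, the stacked residual $\Phi_H(\boldsymbol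 g):=[\phi_0(\boldsymbol g);\phi_1(\boldsymbol g);\dots;\phi_{H-2}(\boldsymbol g)]\in\mathbb R^{(H-1)d_a}$, and $d_H(\boldsymbol g):=\|\Phi_H(\boldsymbol g)\|_2$. For a codebook $\mathcal C=\{\boldsymbol g^1,\dots,\boldsymbol g^K\}$ with $\boldsymbol g^*=\boldsymbol g^{k^*}$, the residual margin is $\bar\gamma_H(\mathcal C;\boldsymbol g^* ):=\min_{k\ne k^*}\|\Phi_H(\boldsymbol g^k)-\Phi_H(\boldsymbol g^* )\|_2$. *)

(* Defs.v *)
From HB Require Import structures.
From mathcomp Require Import all_boot all_order all_algebra.
From mathcomp Require Import boolp classical_sets reals constructive_ereal.
Set Implicit Arguments. Unset Strict Implicit. Unset Printing Implicit Defensive.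
Import Order.TTheory GRing.Theory Num.Theory.
Local Open Scope ring_scope.
Local Open Scope ereal_scope.
Local Open Scope ring_scope.

Section Defs.
Variable R : realType.

Definition enorm n (v : 'rV[R]_n) : R := Num.sqrt (\sum_(i < n) v 0 i ^+ 2).

Variables (da db dg : nat).
Variable Omega : 'rV[R]_da -> 'rV[R]_dg -> 'rV[R]_db.
Variable D : 'rV[R]_db -> 'rV[R]_da -> 'rV[R]_dg -> 'rV[R]_db.
Variable pi : 'rV[R]_db -> 'rV[R]_dg -> 'rV[R]_da.

Definition Fmap (g : 'rV[R]_dg) (x : 'rV[R]_da) : 'rV[R]_da :=
  pi (D (Omega x g) x g) g.

Definition phi (a : nat -> 'rV[R]_da) (t : nat) (g : 'rV[R]_dg) : 'rV[R]_da :=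
  a t.+1 - Fmap g (a t).

(* d_H(g) = || Phi_H(g) ||_2, the 2-norm of the stack [phi_0; ...; phi_{H-2}],
   written out as the square root of the sum of squared block norms *)
Definition dH (H : nat) (a : nat -> 'rV[R]_da) (g : 'rV[R]_dg) : R :=
  Num.sqrt (\sum_(t < H.-1) enorm (phi a t g) ^+ 2).

Definition Phi_dist (H : nat) (a : nat -> 'rV[R]_da) (g g' : 'rV[R]_dg) : R :=
  Num.sqrt (\sum_(t < H.-1) enorm (phi a t g - phi a t g') ^+ 2).

(* residual margin gamma_H(C; g^{k*}) = min_{k <> k*} ||Phi_H(g^k) - Phi_H(gstar)||,
   valued in the extended reals (min over the empty set = +oo) *)
Definition margin (H : nat) (a : nat -> 'rV[R]_da) (K : nat)
    (C : 'I_K -> 'rV[R]_dg) (kstar : 'I_K) : \bar R :=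
  (\big[Order.min/+oo]_(k < K | k != kstar) (Phi_dist H a (C k) (C kstar))%:E)%E.

End Defs.

Section Mismatch.
Variable R : realType.
Variables (da db dg : nat).
Variable Omega : 'rV[R]_da -> 'rV[R]_dg -> 'rV[R]_db.
Variable D Dj : 'rV[R]_db -> 'rV[R]_da -> 'rV[R]_dg -> 'rV[R]_db.
Variable pi pij : 'rV[R]_db -> 'rV[R]_dg -> 'rV[R]_da.
Variables (xi_pi xi_D : R).
Variables (a : nat -> 'rV[R]_da) (b : nat -> 'rV[R]_db) (gstar : 'rV[R]_dg).

Definition eps_t (t : nat) : R :=
  enorm (D (b t) (a t) gstar - Dj (b t) (a t) gstar)
  + xi_D * enorm (Omega (a t) gstar - b t).

Definition delta_act (H : nat) : R :=
  Num.sqrt (\sum_(t < H.-1)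
    (enorm (pij (b t.+1) gstar - pi (b t.+1) gstar) + xi_pi * `|eps_t t|) ^+ 2).

End Mismatch.

(* Main.v *)
Require Import Defs.
From HB Require Import structures.
From mathcomp Require Import all_boot all_order all_algebra.
From mathcomp Require Import boolp classical_sets reals constructive_ereal.
From mathcomp Require Import ring lra zify.
Import Order.TTheory GRing.Theory Num.Theory.
Set Implicit Arguments. Unset Strict Implicit. Unset Printing Implicit Defensive.
Local Open Scope ring_scope.

Section H.
Variable R : realType.

Lemma cs_sum n (x y : 'I_n -> R) :
  (\sum_i x i * y i) ^+ 2 <= (\sum_i x i ^+ 2) * (\sum_i y i ^+ 2).
Proof.
elim: n x y => [|n IH] x y; first by rewrite !big_ord0 expr0n /= mulr0.
rewrite !big_ord_recr /=.
have := IH (fun i => x (widen_ord (leqnSn n) i)) (fun i => y (widen_ord (leqnSn n) i)).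
set s := \sum_(i < n) _. set A := \sum_(i < n) _. set B := \sum_(i < n) _.
have A0 : 0 <= A by apply: sumr_ge0 => i _; apply: sqr_ge0.
have B0 : 0 <= B by apply: sumr_ge0 => i _; apply: sqr_ge0.
move: (x ord_max) (y ord_max) => u v /= hs.
have h1 : 0 <= A * v ^+ 2 + B * u ^+ 2 by apply: addr_ge0; apply: mulr_ge0 => //; apply: sqr_ge0.
have h2 : (2 * s * u * v) ^+ 2 <= (A * v ^+ 2 + B * u ^+ 2) ^+ 2.
  have : 0 <= (A * v ^+ 2 - B * u ^+ 2) ^+ 2 by apply: sqr_ge0.
  have : s ^+ 2 * (u * v) ^+ 2 <= A * B * (u * v) ^+ 2 by apply: ler_wpM2r => //; apply: sqr_ge0.
  move=> p q. nra.
have h3 : 2 * s * u * v <= A * v ^+ 2 + B * u ^+ 2.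
  have := ler_norm (2 * s * u * v).
  have : `|2 * s * u * v| <= A * v ^+ 2 + B * u ^+ 2.
    by rewrite -(ger0_norm h1) -ler_sqr // ?nnegrE ?normr_ge0 // !real_normK ?num_real.
  lra.
nra.
Qed.

Lemma mink n (x y : 'I_n -> R) :
  Num.sqrt (\sum_i (x i + y i) ^+ 2) <=
  Num.sqrt (\sum_i x i ^+ 2) + Num.sqrt (\sum_i y i ^+ 2).
Proof.
set A := \sum_i x i ^+ 2. set B := \sum_i y i ^+ 2.
have A0 : 0 <= A by apply: sumr_ge0 => i _; apply: sqr_ge0.
have B0 : 0 <= B by apply: sumr_ge0 => i _; apply: sqr_ge0.
have hp : 0 <= Num.sqrt A + Num.sqrt B by apply: addr_ge0; apply: sqrtr_ge0.
rewrite -(ger0_norm hp) -sqrtr_sqr ler_sqrt; last exact: sqr_ge0.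
have -> : \sum_i (x i + y i) ^+ 2 = A + B + 2 * \sum_i x i * y i.
  rewrite /A /B -big_split /= mulr_sumr -big_split /=; apply: eq_bigr => i _; ring.
have hs : \sum_i x i * y i <= Num.sqrt A * Num.sqrt B.
  rewrite -sqrtrM //; apply: le_trans (ler_norm _) _.
  rewrite -sqrtr_sqr; apply: ler_wsqrtr; exact: cs_sum.
have := sqr_sqrtr A0; have := sqr_sqrtr B0. move: (Num.sqrt A) (Num.sqrt B) hs => p q hs hA hB.
rewrite -hA -hB in hs *. nra.
Qed.
End H.

Section E.
Variable R : realType.
Lemma enorm_ge0 n (v : 'rV[R]_n) : 0 <= enorm v.
Proof. exact: sqrtr_ge0. Qed.
Lemma enorm_add n (u v : 'rV[R]_n) : enorm (u + v) <= enorm u + enorm v.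
Proof.
rewrite /enorm (eq_bigr (fun i => (u 0 i + v 0 i) ^+ 2)); first exact: mink.
by move=> i _; rewrite mxE.
Qed.
Lemma enorm_opp n (v : 'rV[R]_n) : enorm (- v) = enorm v.
Proof. by rewrite /enorm; congr Num.sqrt; apply: eq_bigr => i _; rewrite mxE sqrrN. Qed.
Lemma enorm_sub n (u v : 'rV[R]_n) : enorm (u - v) <= enorm u + enorm v.
Proof. by rewrite -(enorm_opp v); apply: enorm_add. Qed.
Lemma enorm_sym n (u v : 'rV[R]_n) : enorm (u - v) = enorm (v - u).
Proof. by rewrite -opprB enorm_opp. Qed.
Lemma enorm_tri n (u v w : 'rV[R]_n) : enorm (u - w) <= enorm (u - v) + enorm (v - w).
Proof. have -> : u - w = (u - v) + (v - w) by rewrite addrA subrK. exact: enorm_add. Qed.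
End E.

Theorem theorem5p3 (R : realType) (da db dg : nat) (G : set 'rV[R]_dg)
  (Omega : 'rV[R]_da -> 'rV[R]_dg -> 'rV[R]_db)
  (D Dj : 'rV[R]_db -> 'rV[R]_da -> 'rV[R]_dg -> 'rV[R]_db)
  (pi pij : 'rV[R]_db -> 'rV[R]_dg -> 'rV[R]_da)
  (xi_pi xi_D : R)
  (H : nat) (K : nat) (C : 'I_K -> 'rV[R]_dg) (kstar : 'I_K)
  (a : nat -> 'rV[R]_da) (b : nat -> 'rV[R]_db) :
  (2 <= H)%N ->
  (forall k, G (C k)) ->
  (* trajectory generated by agent j under g* = C kstar *)
  (forall t : nat, (t.+1 < H)%N ->
     b t.+1 = Dj (b t) (a t) (C kstar) /\ a t.+1 = pij (b t.+1) (C kstar)) ->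
  (* Lipschitz assumptions in the belief argument *)
  (forall g, G g -> forall x y : 'rV[R]_db,
     enorm (pi x g - pi y g) <= xi_pi * enorm (x - y)) ->
  (forall g, G g -> forall (u : 'rV[R]_da) (x y : 'rV[R]_db),
     enorm (D x u g - D y u g) <= xi_D * enorm (x - y)) ->
  ((2 * delta_act Omega D Dj pi pij xi_pi xi_D a b (C kstar) H)%:E
     < margin Omega D pi H a C kstar)%E ->
  (* every minimizer khat of k |-> d_H(g^k) returns g* *)
  forall khat : 'I_K,
    (forall k : 'I_K, dH Omega D pi H a (C khat) <= dH Omega D pi H a (C k)) ->
    C khat = C kstar.
Proof.
move=> H2 HG Htr Hpi HD Hm khat Hmin.
set g := C kstar.
set eps := fun t => eps_t Omega D Dj xi_D a b g t.
have Hphi : forall t, (t.+1 < H)%N ->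
  enorm (phi Omega D pi a t g) <=
  enorm (pij (b t.+1) g - pi (b t.+1) g) + xi_pi * `|eps t|.
  move=> t ht; have [hb ha] := Htr t ht.
  rewrite /phi /Fmap ha.
  set b' := b t.+1. set DO := D (Omega (a t) g) (a t) g.
  apply: le_trans (enorm_tri _ (pi b' g) _) _.
  apply: lerD => //.
  have hbd : enorm (b' - DO) <= eps t.
    rewrite /b' hb /eps /eps_t /DO.
    apply: le_trans (enorm_tri _ (D (b t) (a t) g) _) _.
    rewrite (enorm_sym (Dj _ _ _)) (enorm_sym (Omega _ _) (b t)).
    apply: lerD => //. exact: (HD _ (HG kstar)).
  have [xp|xn] := leP 0 xi_pi.
    apply: le_trans (Hpi g (HG _) _ _) _.
    apply: ler_wpM2l => //; apply: le_trans hbd _; exact: ler_norm.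
  have z : forall v : 'rV[R]_db, enorm v = 0.
    move=> v; have := Hpi g (HG kstar) v 0; rewrite subr0.
    have := enorm_ge0 (pi v g - pi 0 g); have := enorm_ge0 v. move=> h1 h2 h3.
    apply/eqP; rewrite eq_le h1 andbT. nra.
  have : eps t = 0 by rewrite /eps /eps_t !z mulr0 addr0.
  move=> ->; rewrite normr0 mulr0.
  by apply: le_trans (Hpi g (HG _) _ _) _; rewrite z mulr0.
have Hdel : dH Omega D pi H a g <= delta_act Omega D Dj pi pij xi_pi xi_D a b g H.
  apply: ler_wsqrtr; apply: ler_sum => t _.
  have ht : (t.+1 < H)%N by move: (ltn_ord t); clear -H2; lia.
  rewrite !expr2; apply: ler_pM; try exact: enorm_ge0; exact: Hphi.
have Hdist : forall g1 g2, Phi_dist Omega D pi H a g1 g2 <=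
    dH Omega D pi H a g1 + dH Omega D pi H a g2.
  move=> g1 g2; rewrite /Phi_dist /dH.
  apply: le_trans (mink _ _); apply: ler_wsqrtr; apply: ler_sum => t _.
  rewrite !expr2; apply: ler_pM; try exact: enorm_ge0; exact: enorm_sub.
apply/eqP; apply: contraT => hne.
have kne : khat != kstar by apply: contraNneq hne => ->.
have hm : (margin Omega D pi H a C kstar <= (Phi_dist Omega D pi H a (C khat) g)%:E)%E.
  rewrite /margin (bigD1 khat) //=. by rewrite ge_min lexx.
have := lt_le_trans Hm hm; rewrite lte_fin => h.
have := Hdist (C khat) g; have := Hmin kstar. fold g. lra.
Qed.
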